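(* Let $|\psi\rangle=\sum_{v,c,w,d}a_{vc,wd}|v\rangle_A|c,w\rangle_B|d\rangle_C$ be a state on $\mathbb{C}^R\otimes(\mathbb{C}^\kappa\otimes\mathbb{C}^R)\otimes\mathbb{C}^\kappa$ (registers 1,2,3,4 with register 1 $=A$, registers 2,3 $=B$, register 4 $=C$), and let $\rho_{B,C}=\mathrm{Tr}_A(|\psi\rangle\langle\psi|)$. Suppose $\mathsf{MatchCheck}$ succeeds on $|\psi\rangle$ with probability $1-\epsilon$ and $\rho_{B,C}$ is separable across $B|C$. Then there is a state $|\phi\rangle$ that is quasirigid after applying $\mathrm{CNOT}_{1,3}\mathrm{CNOT}_{2,4}$ such that $|\langle\phi|\psi\rangle|^2\ge 1-(\kappa+1)\epsilon$.
   Context: $\mathsf{MatchCheck}$ measures all four registers in the computational basis, obtaining $(v,c,w,d)$, and accepts iff $(v,c)=(w,d)$; its success probability on $|\psi\rangle$ is $\sum_{v,c}|a_{vc,vc}|^2$. $\mathrm{CNOT}_{i,j}$ maps $|x\rangle_i|y\rangle_j\mapsto|x\rangle_i|y\oplus x\rangle_j$, with $\oplus$ addition modulo the register dimension (registers 1 and 3 have dimension $R$, registers 2 and 4 dimension $\kappa$). A bipartite state in $\mathbb{C}^R\otimes\mathbb{C}^\kappa$ is quasirigid if it has the form $\sum_{v\in[R]}\alpha_v|v\rangle|c_v\rangle$ for complex $\alpha_v$ and indices $c_v\in[\kappa]$, and rigid if moreover all $\alpha_v=1/\sqrt R$. A four-register state is ''quasirigid after applying $\mathrm{CNOT}_{1,3}\mathrm{CNOT}_{2,4}$''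 if it has the form $\sum_v\alpha_v|v\rangle|c_v\rangle|v\rangle|c_v\rangle$, i.e. applying these CNOTs yields a quasirigid state on registers 1,2 tensored with $|0\rangle|0\rangle$ on registers 3,4. *)

(* Defs.v *)
(* Amplitudes live in an arbitrary numClosedFieldType C
   (e.g. the complex numbers of a realType, or algC). *)
From mathcomp Require Import all_boot all_order all_algebra.
Set Implicit Arguments. Unset Strict Implicit. Unset Printing Implicit Defensive.
Import Order.TTheory GRing.Theory Num.Theory.
Local Open Scope ring_scope.

Section QDefs.
Variable C : numClosedFieldType.

Definition psd_op (T : finType) (M : T -> T -> C) : Prop :=
  forall x : T -> C, 0 <= \sum_(i : T) \sum_(j : T) (x i)^* * M i j * x j.

Definition density_op (T : finType) (M : T -> T -> C) : Prop :=
  psd_op M /\ \sum_(i : T) M i i = 1.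

Definition separable_op (TB TC : finType) (rho : TB * TC -> TB * TC -> C) : Prop :=
  exists (n : nat) (p : 'I_n -> C) (sig : 'I_n -> TB -> TB -> C)
         (tau : 'I_n -> TC -> TC -> C),
    [/\ forall k, 0 <= p k,
        \sum_(k < n) p k = 1,
        forall k, density_op (sig k),
        forall k, density_op (tau k) &
        forall b c b' c',
          rho (b, c) (b', c') = \sum_(k < n) p k * sig k b b' * tau k c c'].

Variables R kappa : nat.

Definition amp := 'I_R -> 'I_kappa -> 'I_R -> 'I_kappa -> C.

Definition sqnorm (a : amp) : C :=
  \sum_(v < R) \sum_(c < kappa) \sum_(w < R) \sum_(d < kappa) `|a v c w d| ^+ 2.

Definition is_state (a : amp) : Prop := sqnorm a = 1.

Definition inner (phi psi : amp) : C :=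
  \sum_(v < R) \sum_(c < kappa) \sum_(w < R) \sum_(d < kappa)
     (phi v c w d)^* * psi v c w d.

Definition matchcheck_prob (a : amp) : C :=
  \sum_(v < R) \sum_(c < kappa) `|a v c v c| ^+ 2.

(* rho_{B,C} = Tr_A |psi><psi|, B = registers 2,3 (indices (c,w)), C = register 4 *)
Definition rhoBC (a : amp) : ('I_kappa * 'I_R) * 'I_kappa -> ('I_kappa * 'I_R) * 'I_kappa -> C :=
  fun x y => \sum_(v < R) a v x.1.1 x.1.2 x.2 * (a v y.1.1 y.1.2 y.2)^*.

Definition quasirigid_after_cnots (phi : amp) : Prop :=
  exists (alpha : 'I_R -> C) (cv : 'I_R -> 'I_kappa),
    forall v c w d,
      phi v c w d = if [&& c == cv v, w == v & d == cv v] then alpha v else 0.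

End QDefs.

(* Main.v *)
Require Import Defs.
From mathcomp Require Import all_boot all_order all_algebra.
From mathcomp Require Import ring zify.
Import Order.TTheory GRing.Theory Num.Theory.
Set Implicit Arguments. Unset Strict Implicit.
Local Open Scope ring_scope.

Section Psd.
Variable C : numClosedFieldType.

Lemma sum_pt1 (T : finType) (i : T) (g : T -> C) :
  (forall k, k != i -> g k = 0) -> \sum_k g k = g i.
Proof. by move=> H; rewrite (bigD1 i) //= big1 ?addr0 // => k /H. Qed.

Lemma sum_pt2 (T : finType) (i j : T) (g : T -> C) : i != j ->
  (forall k, k != i -> k != j -> g k = 0) -> \sum_k g k = g i + g j.
Proof.
move=> ij H; rewrite (bigD1 i) //= (bigD1 j) 1?eq_sym //= big1 ?addr0 //.
by move=> k /andP[kj ki]; apply: H.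
Qed.

Definition pt2 (T : finType) (i j : T) (al be : C) : T -> C :=
  fun k => if k == i then al else if k == j then be else 0.

Lemma qform2 (T : finType) (M : T -> T -> C) i j al be : i != j ->
  \sum_(k : T) \sum_(l : T) ((pt2 i j al be) k)^* * M k l * (pt2 i j al be) l
  = al^* * M i i * al + al^* * M i j * be + be^* * M j i * al + be^* * M j j * be.
Proof.
move=> ij.
have H k (kj : k != i) (kj' : k != j) : pt2 i j al be k = 0.
  by rewrite /pt2 (negbTE kj) (negbTE kj').
have Hi : pt2 i j al be i = al by rewrite /pt2 eqxx.
have Hj : pt2 i j al be j = be by rewrite /pt2 eq_sym (negbTE ij) eqxx.
rewrite (sum_pt2 ij); last first.
  by move=> k ki kj; rewrite big1 // => l _; rewrite H // conjC0 !mul0r.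
rewrite !(sum_pt2 ij) ?Hi ?Hj; first by rewrite !addrA.
  by move=> k ki kj; rewrite H // mulr0.
by move=> k ki kj; rewrite H // mulr0.
Qed.

Lemma psd_diag (T : finType) (M : T -> T -> C) i : psd_op M -> 0 <= M i i.
Proof.
move=> /(_ (fun k => if k == i then 1 else 0)).
rewrite (@sum_pt1 _ i); last first.
  by move=> k /negbTE ki; rewrite big1 // => l _; rewrite ki conjC0 !mul0r.
rewrite (@sum_pt1 _ i); last by move=> k /negbTE ki; rewrite ki mulr0.
by rewrite eqxx conjC1 mul1r mulr1.
Qed.

Lemma psd_herm (T : finType) (M : T -> T -> C) i j : i != j -> psd_op M ->
  M j i = (M i j)^*.
Proof.
move=> ij P.
have ri := geC0_conj (psd_diag i P); have rj := geC0_conj (psd_diag j P).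
have h1 := geC0_conj (P (pt2 i j 1 1)).
have h2 := geC0_conj (P (pt2 i j 1 'i)).
rewrite qform2 // in h1; rewrite qform2 // in h2.
rewrite !rmorphD /= !rmorphM /= !conjCK conjC1 conjCi ri rj in h1 h2.
set a := M i i in h1 h2 ri; set b := M j j in h1 h2 rj.
set m := M i j in h1 h2 *; set n := M j i in h1 h2 *.
have e1 : m^* + n^* - (m + n) = 0.
  by rewrite -(subrr (1 * a * 1 + 1 * m * 1 + 1 * n * 1 + 1 * b * 1)) -{1}h1; ring.
have e2 : 'i * (n^* - m^* - m + n) = 0.
  rewrite -(subrr (1 * a * 1 + 1 * m * 'i + - 'i * n * 1 + - 'i * b * 'i)) -{1}h2.
  by rewrite -[b in RHS]rj; ring.
move: e2 => /eqP; rewrite mulf_eq0 (negbTE (neq0Ci C)) /= => /eqP e2.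
have : 2 * (m^* - n) = 0 by rewrite -(subrr 0) -{1}e1 -{1}e2; ring.
move/eqP; rewrite mulf_eq0 pnatr_eq0 /= subr_eq0 => /eqP ->.
by [].
Qed.

Lemma psd_cs (T : finType) (M : T -> T -> C) i j : psd_op M ->
  `|M i j| ^+ 2 <= M i i * M j j.
Proof.
move=> P; have [<-|ij] := eqVneq i j.
  by rewrite ger0_norm ?psd_diag.
have ha := psd_diag i P; have hb := psd_diag j P.
have H := psd_herm ij P.
have q1 := P (pt2 i j (M j j) (- (M i j)^*)).
have q2 := P (pt2 i j (- M i j) (M i i)).
have q3 := P (pt2 i j 1 (- (M i j)^*)).
rewrite qform2 // H ?rmorphN /= ?conjCK ?(geC0_conj ha) ?(geC0_conj hb) in q1.
rewrite qform2 // H ?rmorphN /= ?conjCK ?(geC0_conj ha) ?(geC0_conj hb) in q2.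
rewrite qform2 // H ?rmorphN /= ?conjCK ?conjC1 ?(geC0_conj ha) ?(geC0_conj hb) in q3.
rewrite normCK.
set a := M i i in ha q1 q2 q3 *; set b := M j j in hb q1 q2 q3 *.
set m := M i j in q1 q2 q3 *.
rewrite -subr_ge0.
have [b0|bn0] := eqVneq b 0.
  have [a0|an0] := eqVneq a 0.
    move: q3; rewrite a0 b0 => q3.
    have : 0 <= - (m * m^*) *+ 2 by move: q3; congr (0 <= _); ring.
    rewrite pmulrn_lge0 // oppr_ge0 => h.
    by rewrite ?a0 ?b0 mul0r sub0r oppr_ge0.
  have ap : 0 < a by rewrite lt_def an0 ha.
  rewrite -(pmulr_rge0 _ ap); move: q2; congr (0 <= _); rewrite b0; ring.
have bp : 0 < b by rewrite lt_def bn0 hb.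
rewrite -(pmulr_rge0 _ bp); move: q1; congr (0 <= _); ring.
Qed.

Lemma amgm (A B X : C) : 0 <= A -> 0 <= B -> 0 <= X -> X ^+ 2 <= A * B ->
  X *+ 2 <= A + B.
Proof.
move=> hA hB hX h.
have rA : A \is Num.real by apply: ger0_real.
have rB : B \is Num.real by apply: ger0_real.
have h2 : X ^+ 2 <= ((A + B) / 2) ^+ 2 by apply: le_trans h (real_leif_AGM2 rA rB).
have hAB : 0 <= (A + B) / 2 by rewrite divr_ge0 ?addr_ge0 ?ler0n.
rewrite ler_sqr ?nnegrE // in h2.
have -> : A + B = (A + B) / 2 *+ 2.
  by rewrite -mulr_natr mulfVK // pnatr_eq0.
by rewrite lerMn2r.
Qed.

Lemma sep_bound (TB TC : finType) (rho : TB * TC -> TB * TC -> C) b c b' c' :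
  separable_op rho ->
  `|rho (b, c) (b', c')| *+ 2 <= rho (b, c') (b, c') + rho (b', c) (b', c).
Proof.
case=> n [p [sg [tu [hp _ hs ht hr]]]].
rewrite !hr -big_split /=.
apply: le_trans (ler_wMn2r _ (ler_norm_sum _ _ _)) _.
rewrite -sumrMnl.
apply: ler_sum => k _.
have [hs1 _] := hs k; have [ht1 _] := ht k.

rewrite -!mulrA -mulrDr normrM (ger0_norm (hp k)) -mulrnAr.

apply: (ler_wpM2l (hp k)).
rewrite normrM.
apply: amgm; rewrite ?mulr_ge0 ?psd_diag ?normr_ge0 //.
rewrite exprMn.

have := ler_pM (exprn_ge0 2 (normr_ge0 _)) (exprn_ge0 2 (normr_ge0 _)) (psd_cs b b' hs1) (psd_cs c c' ht1).
move=> /le_trans; apply.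
by rewrite [X in _ <= X]mulrACA [tu k c' c' * _]mulrC.
Qed.
End Psd.


Section Main.
Variable C : numClosedFieldType.

Lemma sum_sub_le (T : finType) (P : pred T) (F : T -> C) :
  (forall i, 0 <= F i) -> \sum_(i | P i) F i <= \sum_i F i.
Proof.
move=> h; rewrite [X in _ <= X](bigID P) /= lerDl.
by apply: sumr_ge0 => i _.
Qed.

Lemma exists_max (T : finType) (t0 : T) (f : T -> C) :
  (forall i, 0 <= f i) -> exists x, forall y, f y <= f x.
Proof.
move=> h.
suff [x hx] : exists x, forall y, y \in enum T -> f y <= f x.
  by exists x => y; apply: hx; rewrite mem_enum.
elim: (enum T) => [|y s [x hx]]; first by exists t0.
have [hyx|hyx] := boolP (f y <= f x).
  by exists x => z; rewrite inE => /orP[/eqP->|/hx].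
exists y => z; rewrite inE => /orP[/eqP->//|/hx hz].
apply: le_trans hz _; apply: ltW.
by rewrite real_ltNge ?ger0_real.
Qed.

Variables R kappa : nat.
Variable a : amp C R kappa.

Definition N v c w d := `|a v c w d| ^+ 2.
Definition mm (w : 'I_R) (c d : 'I_kappa) := \sum_(v < R) N v c w d.
Definition ee (w : 'I_R) (c : 'I_kappa) := \sum_(v < R | v != w) N v c w c.
Definition MM w := \sum_(c < kappa) \sum_(d < kappa | d != c) mm w c d.
Definition EE w := \sum_(c < kappa) ee w c.

Lemma N_ge0 v c w d : 0 <= N v c w d.
Proof. by rewrite exprn_ge0. Qed.
Lemma mm_ge0 w c d : 0 <= mm w c d.
Proof. by apply: sumr_ge0 => *; apply: N_ge0. Qed.
Lemma ee_ge0 w c : 0 <= ee w c.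
Proof. by apply: sumr_ge0 => *; apply: N_ge0. Qed.
Lemma MM_ge0 w : 0 <= MM w.
Proof. by apply: sumr_ge0 => *; apply: sumr_ge0 => *; apply: mm_ge0. Qed.
Lemma EE_ge0 w : 0 <= EE w.
Proof. by apply: sumr_ge0 => *; apply: ee_ge0. Qed.

Lemma eps_decomp :
  sqnorm a - matchcheck_prob a = \sum_(w < R) (MM w + EE w).
Proof.
rewrite /sqnorm /matchcheck_prob.
have -> : \sum_(v < R) \sum_(c < kappa) \sum_(w < R) \sum_(d < kappa) `|a v c w d| ^+ 2
   = \sum_(w < R) \sum_(c < kappa) \sum_(d < kappa) \sum_(v < R) N v c w d.
  rewrite (eq_bigr (fun v => \sum_(w < R) \sum_(c < kappa) \sum_(d < kappa) N v c w d)); last first.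
    by move=> v _; rewrite exchange_big.
  rewrite exchange_big; apply: eq_bigr => w _.
  by rewrite exchange_big; apply: eq_bigr => c _; rewrite exchange_big.
rewrite -sumrB; apply: eq_bigr => w _.
rewrite /MM /EE -big_split /= -sumrB; apply: eq_bigr => c _.
rewrite (bigD1 c) //= /ee (bigD1 w) //= /N /mm.
ring.
Qed.



Lemma rho_diag c w d : rhoBC a ((c, w), d) ((c, w), d) = mm w c d.
Proof. by apply: eq_bigr => v _; rewrite /N normCK. Qed.

Lemma pair_bound w c c0 : separable_op (rhoBC a) ->
  `|a w c w c| <= `|a w c0 w c0| ->
  N w c w c *+ 2 <= mm w c c0 + mm w c0 c + (ee w c + ee w c0).
Proof.
move=> hs hle.
set G := \sum_(v < R) a v c w c * (a v c0 w c0)^*.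
set X := \sum_(v < R | v != w) a v c w c * (a v c0 w c0)^*.
have hG : G = a w c w c * (a w c0 w c0)^* + X by rewrite /G (bigD1 w).
have h1 : N w c w c <= `|G| + `|X|.
  have -> : `|G| + `|X| = `|G| + `|- X| by rewrite normrN.
  apply: le_trans (ler_normD _ _).
  rewrite hG addrK normrM norm_conjC /N expr2.
  by apply: ler_wpM2l => //; rewrite normr_ge0.
apply: le_trans (ler_wMn2r 2 h1) _.
rewrite mulrnDl; apply: lerD.
  have := sep_bound (c, w) c (c0, w) c0 hs.
  by rewrite !rho_diag.
apply: le_trans (ler_wMn2r 2 (ler_norm_sum _ _ _)) _.
rewrite -sumrMnl /ee -big_split /=; apply: ler_sum => v _.
rewrite normrM norm_conjC; apply: amgm; rewrite ?N_ge0 ?mulr_ge0 ?normr_ge0 //.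
by rewrite /N exprMn.
Qed.

Lemma w_bound w c0 : separable_op (rhoBC a) ->
  (forall c, `|a w c w c| <= `|a w c0 w c0|) -> (0 < kappa)%N ->
  \sum_(c < kappa | c != c0) N w c w c <= kappa%:R * (MM w + EE w).
Proof.
move=> hs hmax k0.
rewrite -(ler_pMn2r (n := 2)) // -sumrMnl.
have hp : forall c, c != c0 -> N w c w c *+ 2 <= mm w c c0 + mm w c0 c + (ee w c + ee w c0) by move=> c _; apply: pair_bound.
apply: le_trans (ler_sum _ hp) _.
rewrite !big_split /=.
have hA : \sum_(c < kappa | c != c0) mm w c c0 <= MM w.
  have hF c : 0 <= \sum_(d < kappa | d != c) mm w c d.
    by apply: sumr_ge0 => *; apply: mm_ge0.
  apply: le_trans _ (sum_sub_le (fun c => c != c0) hF).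
  apply: ler_sum => c hc.
  rewrite (bigD1 c0) 1?eq_sym //= lerDl.
  by apply: sumr_ge0 => *; apply: mm_ge0.
have hB : \sum_(c < kappa | c != c0) mm w c0 c <= MM w.
  rewrite /MM [X in _ <= X](bigD1 c0) //= lerDl.
  by apply: sumr_ge0 => *; apply: sumr_ge0 => *; apply: mm_ge0.
have hC : \sum_(c < kappa | c != c0) ee w c <= EE w.
  by apply: sum_sub_le => c; apply: ee_ge0.
have hD : \sum_(c < kappa | c != c0) ee w c0 <= EE w *+ kappa.
  apply: (@le_trans _ _ (\sum_(c < kappa) EE w)); last by rewrite sumr_const card_ord.
  apply: le_trans _ (sum_sub_le (fun c => c != c0) (fun _ => EE_ge0 w)).
  apply: ler_sum => c _.
  by rewrite /EE [X in _ <= X](bigD1 c0) //= lerDl; apply: sumr_ge0 => *; apply: ee_ge0.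
apply: le_trans (lerD (lerD hA hB) (lerD hC hD)) _.
rewrite mulr_natl -mulrnA mulrnDl -(mulr2n (MM w)) -mulrS.
apply: lerD; apply: ler_wpMn2l; rewrite ?MM_ge0 ?EE_ge0 //.
  by lia.
by lia.
Qed.

End Main.

Section Fin.
Variable C : numClosedFieldType.
Variables R kappa : nat.

Lemma sum3 (x : 'I_kappa) (y : 'I_R) (z : 'I_kappa) (F : 'I_kappa -> 'I_R -> 'I_kappa -> C) :
  (forall c w d, ~~ [&& c == x, w == y & d == z] -> F c w d = 0) ->
  \sum_(c < kappa) \sum_(w < R) \sum_(d < kappa) F c w d = F x y z.
Proof.
move=> h.
rewrite (@sum_pt1 _ _ x); last first.
  move=> c cx; rewrite big1 // => w _; rewrite big1 // => d _.
  by apply: h; rewrite (negbTE cx).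
rewrite (@sum_pt1 _ _ y); last first.
  move=> w wy; rewrite big1 // => d _.
  by apply: h; rewrite eqxx (negbTE wy).
rewrite (@sum_pt1 _ _ z) // => d dz.
by apply: h; rewrite !eqxx (negbTE dz).
Qed.

Definition phiA (cv : 'I_R -> 'I_kappa) (alpha : 'I_R -> C) : amp C R kappa :=
  fun v c w d => if [&& c == cv v, w == v & d == cv v] then alpha v else 0.

Lemma sqnorm_phiA cv alpha : sqnorm (phiA cv alpha) = \sum_(v < R) `|alpha v| ^+ 2.
Proof.
apply: eq_bigr => v _.
rewrite (@sum3 (cv v) v (cv v) (fun c w d => `|phiA cv alpha v c w d| ^+ 2)).
  by rewrite /phiA !eqxx.
by move=> c w d h; rewrite /phiA (negbTE h) normr0 expr0n.
Qed.

Lemma inner_phiA cv alpha (psi : amp C R kappa) :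
  inner (phiA cv alpha) psi = \sum_(v < R) (alpha v)^* * psi v (cv v) v (cv v).
Proof.
apply: eq_bigr => v _.
rewrite (@sum3 (cv v) v (cv v) (fun c w d => (phiA cv alpha v c w d)^* * psi v c w d)).
  by rewrite /phiA !eqxx.
by move=> c w d h; rewrite /phiA (negbTE h) conjC0 mul0r.
Qed.

End Fin.

Unset Implicit Arguments.

Theorem lemma4p4 (C : numClosedFieldType) (R kappa : nat)
    (psi : amp C R kappa) (eps : C) :
  is_state psi ->
  matchcheck_prob psi = 1 - eps ->
  separable_op (rhoBC psi) ->
  exists phi : amp C R kappa,
    [/\ is_state phi, quasirigid_after_cnots phi &
        `|inner phi psi| ^+ 2 >= 1 - (kappa%:R + 1) * eps].
Proof.
move=> hst hmc hsep.
have [r0 _|hn] := pickP (fun _ : 'I_R => true); last first.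
  move: hst; rewrite /is_state /sqnorm big1 => [/eqP|v _]; first by rewrite eq_sym oner_eq0.
  by have := hn v.
have [k0 _|hn] := pickP (fun _ : 'I_kappa => true); last first.
  move: hst; rewrite /is_state /sqnorm big1 => [/eqP|v _]; first by rewrite eq_sym oner_eq0.
  by rewrite big1 // => c _; have := hn c.
have kpos : (0 < kappa)%N by apply: leq_ltn_trans (ltn_ord k0).
have hex w : exists c0, forall c, `|psi w c w c| <= `|psi w c0 w c0|.
  by apply: (exists_max k0 (f := fun c => `|psi w c w c|)) => c; apply: normr_ge0.
have [cv hcv] := fin_all_exists hex.
set S := \sum_(w < R) N psi w (cv w) w (cv w).
set D := \sum_(w < R) \sum_(c < kappa | c != cv w) N psi w c w c.
have hm : 1 - eps = S + D.
  rewrite -hmc /matchcheck_prob /S /D -big_split /=; apply: eq_bigr => w _.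
  by rewrite (bigD1 (cv w)).
have he : eps = \sum_(w < R) (MM psi w + EE psi w).
  rewrite -eps_decomp hst hmc; ring.
have hD : D <= kappa%:R * eps.
  rewrite he mulr_sumr; apply: ler_sum => w _.
  exact: w_bound.
have hS : 1 - (kappa%:R + 1) * eps <= S.
  rewrite -subr_ge0 (_ : _ - _ = kappa%:R * eps - D); first by rewrite subr_ge0.
  have -> : S = 1 - eps - D by rewrite hm; ring.
  ring.
have S0 : 0 <= S by apply: sumr_ge0 => *; apply: N_ge0.
have [Se0|Sn0] := eqVneq S 0.
  exists (phiA cv (fun v => (v == r0)%:R)); split.
  - rewrite /is_state sqnorm_phiA (bigD1 r0) //= eqxx normr1 expr1n big1 ?addr0 //.
    by move=> v /negbTE ->; rewrite normr0 expr0n.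
  - by exists (fun v => (v == r0)%:R), cv.
  - by apply: le_trans hS _; rewrite Se0 exprn_ge0 ?normr_ge0.
have Sp : 0 < S by rewrite lt_def Sn0 S0.
set k := (sqrtC S)^-1.
have kp : 0 < k by rewrite invr_gt0 sqrtC_gt0.
have k2 : k ^+ 2 = S^-1 by rewrite /k exprVn sqrtCK.
exists (phiA cv (fun v => psi v (cv v) v (cv v) * k)); split.
- rewrite /is_state sqnorm_phiA.
  under eq_bigr do rewrite normrM (gtr0_norm kp) exprMn.
  by rewrite -mulr_suml -/(N psi _ _ _ _) k2 mulfV.
- by exists (fun v => psi v (cv v) v (cv v) * k), cv.
- rewrite inner_phiA.
  under eq_bigr do rewrite rmorphM /= (geC0_conj (ltW kp)) mulrAC -normCKC.
  rewrite -mulr_suml -/S normrM (gtr0_norm kp) (gtr0_norm Sp) exprMn k2.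
  by rewrite expr2 mulfK.
Qed.
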